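(* Fix $\beta\ne0$. For any episode $k\in[K]$, with $\pi^k$ the policy used in episode $k$ and $\mathcal{F}_k$ the history before episode $k$, $$\frac1\beta\big[e^{\beta V_1^*(s_1)}-e^{\beta V_1^{\pi^k}(s_1)}\big]=\mathbb{E}\Big[\sum_{h=1}^H\overline{\Delta}_h\big(s_h,\pi^k_h(s_h);\tau^{\pi^k}_{h-1}\big)\,\Big|\,\mathcal{F}_k\Big],$$ where $\tau^{\pi^k}=((s_h,\pi_h^k(s_h)))_{h\in[H]}$ is the random trajectory generated from $s_1$ by following $\pi^k$ under the transitions $\mathcal{P}$.
   Context: Episodic finite-horizon tabular MDP with finite states $\mathcal{S}$, finite actions $\mathcal{A}$, horizon $H$, $K$ episodes, transitions $\mathcal{P}_h(\cdot\mid s,a)$, deterministic rewards $r_h:\mathcal{S}\times\mathcal{A}\to[0,1]$, fixed initial state $s_1$. A policy is $\pi=(\pi_h:\mathcal{S}\to\mathcal{A})_{h\in[H]}$; the learner's policy $\pi^k$ in episode $k$ is determined by $\mathcal{F}_k$. For $\beta\ne0$: $V_h^\pi(s)=\frac1\beta\log\mathbb{E}[e^{\beta\sum_{i=h}^H r_i(s_i,\pi_i(s_i))}\mid s_h=s]$, $Q_h^\pi(s,a)$ likewise with $a_h=a$ and $\pi$ thereafter; $V^*_h=\sup_\pi V^\pi_h$ attained by an optimal $\pi^*$, $Q^*_h=Q^{\pi^*}_h$. For a trajectory prefix $\tau_{h-1}=((s_j,a_j))_{j<h}$, $R(\tau_{h-1})=\sum_{j<h}r_j(s_j,a_j)$ (zero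 for $h=1$), and the semi-normalized gap is $\overline{\Delta}_h(s,a;\tau_{h-1})=\frac1\beta e^{\beta R(\tau_{h-1})}[e^{\beta V^*_h(s)}-e^{\beta Q^*_h(s,a)}]$. *)

(* Defs.v *)
From HB Require Import structures.
From mathcomp Require Import all_boot all_order all_algebra.
From mathcomp Require Import all_classical all_reals all_analysis.
Set Implicit Arguments. Unset Strict Implicit. Unset Printing Implicit Defensive.
Import Order.TTheory GRing.Theory Num.Theory.
Local Open Scope ring_scope.

Section MDP.
Variables (R : realType) (S A : finType).
(* Steps are indexed by nat; step h ranges over 1..H. *)
(* P h s a s' = P_h(s' | s, a);  r h s a = r_h(s, a). *)
Variables (P : nat -> S -> A -> S -> R) (r : nat -> S -> A -> R).

Definition policy := nat -> S -> A.

(* Expectation of F over the random trajectory ((s_h,a_h),...,(s_{h+n-1},a_{h+n-1}))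
   started at state s at step h, taking action a at step h and following pi
   afterwards.  The next state after the last pair is drawn and discarded. *)
Fixpoint texp_from (pi : policy) (n h : nat) (s : S) (a : A)
    (F : seq (S * A) -> R) : R :=
  match n with
  | 0 => F [::]
  | n'.+1 => \sum_(s' : S) P h s a s' *
      (match n' with
       | 0 => F [:: (s, a)]
       | _ => texp_from pi n' h.+1 s' (pi h.+1 s') (fun t => F ((s, a) :: t))
       end)
  end.

Definition texp (pi : policy) (n h : nat) (s : S) (F : seq (S * A) -> R) : R :=
  texp_from pi n h s (pi h s) F.

Fixpoint retsum (h : nat) (t : seq (S * A)) : R :=
  match t with
  | [::] => 0
  | (s, a) :: t' => r h s a + retsum h.+1 t'
  end.

Variables (beta : R) (H : nat).

Definition Vpi (pi : policy) (h : nat) (s : S) : R :=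
  beta^-1 * ln (texp pi (H.+1 - h) h s (fun t => expR (beta * retsum h t))).

Definition Qpi (pi : policy) (h : nat) (s : S) (a : A) : R :=
  beta^-1 * ln (texp_from pi (H.+1 - h) h s a (fun t => expR (beta * retsum h t))).

Definition gapbar (pistar : policy) (h : nat) (s : S) (a : A)
    (tau : seq (S * A)) : R :=
  beta^-1 * expR (beta * retsum 1 tau) *
  (expR (beta * Vpi pistar h s) - expR (beta * Qpi pistar h s a)).

(* sum_{h=1}^H gapbar_h(s_h, a_h; tau_{h-1}) for a full trajectory t of length H,
   whose i-th entry (0-based) is (s_{i+1}, a_{i+1}) *)
Definition sum_gaps (pistar : policy) (d : S * A) (t : seq (S * A)) : R :=
  \sum_(i < H) gapbar pistar i.+1 (nth d t i).1 (nth d t i).2 (take i t).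

End MDP.

(* Main.v *)
Require Import Defs.
From HB Require Import structures.
From mathcomp Require Import all_boot all_order all_algebra.
From mathcomp Require Import all_classical all_reals all_analysis.
From mathcomp Require Import ring lra.
Set Implicit Arguments. Unset Strict Implicit. Unset Printing Implicit Defensive.
Import Order.TTheory GRing.Theory Num.Theory.
Local Open Scope ring_scope.

Lemma texp_from_S (R : realType) (S A : finType) (P : nat -> S -> A -> S -> R)
  (pi : policy S A) n h s a F :
  texp_from P pi n.+1 h s a F =
  \sum_(s' : S) P h s a s' * texp_from P pi n h.+1 s' (pi h.+1 s') (fun t => F ((s, a) :: t)).
Proof. by case: n. Qed.

Lemma texp_lin (R : realType) (S A : finType) (P : nat -> S -> A -> S -> R)
  (HP1 : forall h s a, \sum_(s' : S) P h s a s' = 1)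
  (pi : policy S A) n : forall h s a c d G,
  texp_from P pi n h s a (fun t => c + d * G t) = c + d * texp_from P pi n h s a G.
Proof.
elim: n => [|n IH] h s a c d G; first by [].
rewrite !texp_from_S.
under eq_bigr => s' _ do rewrite (IH _ _ _ c d (fun t => G ((s, a) :: t))).
rewrite mulr_sumr -[c in RHS]mulr1 -(HP1 h s a) mulr_sumr -big_split /=.
by apply: eq_bigr => s' _; ring.
Qed.

Lemma texp_pos (R : realType) (S A : finType) (P : nat -> S -> A -> S -> R)
  (HP0 : forall h s a s', 0 <= P h s a s')
  (HP1 : forall h s a, \sum_(s' : S) P h s a s' = 1)
  (pi : policy S A) n : forall h s a F, (forall t, 0 < F t) ->
  0 < texp_from P pi n h s a F.
Proof.
elim: n => [|n IH] h s a F HF; first exact: HF.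
rewrite texp_from_S.
have [s0 Hs0] : exists s0, 0 < P h s a s0.
  apply/not_existsP => Hn.
  have : \sum_(s' : S) P h s a s' = 0.
    apply: big1 => s' _; apply/eqP; rewrite eq_le HP0 andbT.
    by rewrite leNgt; apply/negP => /(Hn s').
  by rewrite HP1 => /eqP; rewrite oner_eq0.
rewrite (bigD1 s0) //=; apply: ltr_pwDl.
  by apply: mulr_gt0 => //; apply: IH.
apply: sumr_ge0 => i _; apply: mulr_ge0 => //; apply/ltW/IH => t; exact: HF.
Qed.
Definition Wf (R : realType) (S A : finType) (P : nat -> S -> A -> S -> R) (r : nat -> S -> A -> R)
  (beta : R) (H : nat) (pi : policy S A) h s :=
  texp P pi (H.+1 - h) h s (fun t => expR (beta * retsum r h t)).
Definition Zf (R : realType) (S A : finType) (P : nat -> S -> A -> S -> R) (r : nat -> S -> A -> R)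
  (beta : R) (H : nat) (pi : policy S A) h s a :=
  texp_from P pi (H.+1 - h) h s a (fun t => expR (beta * retsum r h t)).

Lemma bellman (R : realType) (S A : finType) (P : nat -> S -> A -> S -> R) (r : nat -> S -> A -> R)
  (HP1 : forall h s a, \sum_(s' : S) P h s a s' = 1)
  (beta : R) (H : nat) (pi : policy S A) h s a : (h <= H)%N ->
  Zf P r beta H pi h s a = expR (beta * r h s a) * \sum_(s' : S) P h s a s' * Wf P r beta H pi h.+1 s'.
Proof.
move=> hH; rewrite /Zf /Wf subSS (subSn hH) texp_from_S mulr_sumr.
apply: eq_bigr => s' _.
rewrite (_ : (fun t => _) = (fun t => 0 + expR (beta * r h s a) * expR (beta * retsum r h.+1 t))); last first.
  by apply/funext => t /=; rewrite add0r mulrDr expRD.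
by rewrite texp_lin // add0r /texp; ring.
Qed.

Definition gs (R : realType) (S A : finType) (P : nat -> S -> A -> S -> R) (r : nat -> S -> A -> R)
  (beta : R) (H : nat) (pistar : policy S A) n h (d : S * A) (t : seq (S * A)) :=
  \sum_(j < n) beta^-1 * expR (beta * retsum r h (take j t)) *
    (Wf P r beta H pistar (h + j) (nth d t j).1 - Zf P r beta H pistar (h + j) (nth d t j).1 (nth d t j).2).

Lemma claim (R : realType) (S A : finType) (P : nat -> S -> A -> S -> R) (r : nat -> S -> A -> R)
  (HP1 : forall h s a, \sum_(s' : S) P h s a s' = 1)
  (beta : R) (H : nat) (pistar pi : policy S A) d n : forall h s a, (h + n = H.+1)%N ->
  texp_from P pi n h s a (gs P r beta H pistar n h d) =
  beta^-1 * (Wf P r beta H pistar h s - texp_from P pi n h s a (fun t => expR (beta * retsum r h t))).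
Proof.
elim: n => [|n IH] h s a hn.
  rewrite /= /gs big_ord0 /Wf addn0 in hn *; rewrite hn subnn /= mulr0 expR0.
  by rewrite /texp /= mulr0 expR0 subrr mulr0.
have hH : (h <= H)%N by rewrite -ltnS -hn addnS ltnS leq_addr.
have hn' : (h.+1 + n = H.+1)%N by rewrite addSnnS.
rewrite !texp_from_S.
pose c := beta^-1 * (Wf P r beta H pistar h s - Zf P r beta H pistar h s a).
pose e := expR (beta * r h s a).
rewrite (_ : (fun t => gs P r beta H pistar n.+1 h d ((s, a) :: t)) =
   (fun t => c + e * gs P r beta H pistar n h.+1 d t)); last first.
  apply/funext => t; rewrite /gs big_ord_recl /= addn0 mulr0 expR0 mulr1; congr (_ + _).
  rewrite mulr_sumr; apply: eq_bigr => j _ /=.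
  rewrite /bump leq0n add1n add0n addSnnS (mulrDr beta) expRD /e; ring.
under eq_bigr => s' _ do rewrite texp_lin // IH //.
rewrite (_ : (fun t => expR (beta * retsum r h ((s, a) :: t))) =
   (fun t => 0 + e * expR (beta * retsum r h.+1 t))); last first.
  by apply/funext => t /=; rewrite add0r mulrDr expRD.
under [in RHS]eq_bigr => s' _ do rewrite texp_lin // add0r.
have eq1 : \sum_(s' : S) P h s a s' * (c + e * (beta^-1 * (Wf P r beta H pistar h.+1 s' -
     texp_from P pi n h.+1 s' (pi h.+1 s') (fun t => expR (beta * retsum r h.+1 t))))) =
   c * \sum_(s' : S) P h s a s' + (e * beta^-1) * \sum_(s' : S) P h s a s' * Wf P r beta H pistar h.+1 s'
   - (e * beta^-1) * \sum_(s' : S) P h s a s' *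
     texp_from P pi n h.+1 s' (pi h.+1 s') (fun t => expR (beta * retsum r h.+1 t)).
  rewrite !mulr_sumr -big_split -sumrB /=; apply: eq_bigr => s' _; ring.
have eq2 : \sum_(s' : S) P h s a s' * (e *
     texp_from P pi n h.+1 s' (pi h.+1 s') (fun t => expR (beta * retsum r h.+1 t))) =
   e * \sum_(s' : S) P h s a s' *
     texp_from P pi n h.+1 s' (pi h.+1 s') (fun t => expR (beta * retsum r h.+1 t)).
  rewrite mulr_sumr; apply: eq_bigr => s' _; ring.
rewrite eq1 eq2 HP1 /c (bellman r HP1) // -/e; ring.
Qed.

Lemma expVpi (R : realType) (S A : finType) (P : nat -> S -> A -> S -> R) (r : nat -> S -> A -> R)
  (HP0 : forall h s a s', 0 <= P h s a s')
  (HP1 : forall h s a, \sum_(s' : S) P h s a s' = 1)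
  (beta : R) (H : nat) (Hbeta : beta != 0) pi h s :
  expR (beta * Vpi P r beta H pi h s) = Wf P r beta H pi h s.
Proof.
rewrite /Vpi mulrA mulfV // mul1r lnK //; rewrite posrE.
by apply: texp_pos => // t; exact: expR_gt0.
Qed.

Lemma expQpi (R : realType) (S A : finType) (P : nat -> S -> A -> S -> R) (r : nat -> S -> A -> R)
  (HP0 : forall h s a s', 0 <= P h s a s')
  (HP1 : forall h s a, \sum_(s' : S) P h s a s' = 1)
  (beta : R) (H : nat) (Hbeta : beta != 0) pi h s a :
  expR (beta * Qpi P r beta H pi h s a) = Zf P r beta H pi h s a.
Proof.
rewrite /Qpi mulrA mulfV // mul1r lnK //; rewrite posrE.
by apply: texp_pos => // t; exact: expR_gt0.
Qed.

Theorem lemma4 (R : realType) (S A : finType)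
  (P : nat -> S -> A -> S -> R) (r : nat -> S -> A -> R)
  (beta : R) (H K : nat) (s1 : S)
  (HP0 : forall h s a s', 0 <= P h s a s')
  (HP1 : forall h s a, \sum_(s' : S) P h s a s' = 1)
  (Hr : forall h s a, 0 <= r h s a <= 1)
  (Hbeta : beta != 0)
  (pistar : policy S A)
  (Hopt : forall (pi : policy S A) (h : nat) (s : S),
      Vpi P r beta H pi h s <= Vpi P r beta H pistar h s)
  (pis : nat -> policy S A) (k : nat) (Hk : (1 <= k <= K)%N) :
  beta^-1 * (expR (beta * Vpi P r beta H pistar 1 s1)
             - expR (beta * Vpi P r beta H (pis k) 1 s1))
  = texp P (pis k) H 1 s1
      (sum_gaps P r beta H pistar (s1, pis k 1%N s1)).
Proof.
rewrite (_ : sum_gaps P r beta H pistar (s1, pis k 1%N s1) =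
   gs P r beta H pistar H 1 (s1, pis k 1%N s1)); last first.
  apply/funext => t; rewrite /sum_gaps /gs; apply: eq_bigr => i _.
  by rewrite /gapbar (expVpi r HP0 HP1) // (expQpi r HP0 HP1) // add1n.
rewrite /texp (claim r HP1) ?add1n // !(expVpi r HP0 HP1) //.
by rewrite /Wf subn1.
Qed.
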